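(* Let $n\ge 2$ and let $\mathbf d_n=(d_1,d_2,\ldots,d_n)$ be a nonincreasing sequence of nonnegative integers. Then $\mathbf d_n$ is the degree sequence of some Toeplitz graph on $n$ vertices if and only if there is a permutation $\pi$ of $[n]$ such that, writing $m=\lfloor (n-1)/2\rfloor$ and letting $s$ be the number of indices $i\in\{1,\ldots,m\}$ with $d_{\pi(i+1)}\ne d_{\pi(i)}$: (a) $|d_{\pi(i+1)}-d_{\pi(i)}|\le 1$ for every $i\in[n-1]$; (b) $d_{\pi(i)}=d_{\pi(n-i+1)}$ for every $i\in[n]$; (c) $s\le d_{\pi(1)}\le n-1-s$; (d) if $n$ is odd, then $d_{\pi(1)}$ and $s$ have the same parity.
   Context: A Toeplitz graph on $n$ vertices is a simple graph whose adjacency matrix is a symmetric $(0,1)$ Toeplitz matrix with zero diagonal; equivalently, for some $k\ge 0$ and integers $1\le t_1<\cdots<t_k\le n-1$, it is the graph $G_n\langle t_1,\ldots,t_k\rangle$ on vertex set $[n]$ in which distinct $i,j$ are adjacent iff $|i-j|\in\{t_1,\ldots,t_k\}$ (with $k=0$ giving the edgeless graph). The degree sequence of a graph is the nonincreasing sequence of its vertex degrees. *)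

(* Defs.v *)
From mathcomp Require Import all_boot all_order.

Set Implicit Arguments. Unset Strict Implicit. Unset Printing Implicit Defensive.

(* Vertices of an n-vertex graph are 0, ..., n-1 (i.e. 'I_n); the paper's
   vertex i in [n] corresponds to i-1 here. *)

Definition ndist (i j : nat) : nat := (i - j) + (j - i).

(* The Toeplitz graph G_n<t_1,...,t_k>: the set T of differences
   ({t_1,...,t_k}, a subset of {1,...,n-1}) is given as a sequence. *)
Definition toeplitz_adj (n : nat) (T : seq nat) : rel 'I_n :=
  fun i j => (i != j) && (ndist i j \in T).

Definition is_toeplitz_set (n : nat) (T : seq nat) : bool :=
  uniq T && all (fun t => (1 <= t <= n.-1)) T.

Definition degree (n : nat) (e : rel 'I_n) (v : 'I_n) : nat :=
  #|[set w | e v w]|.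

Definition degree_sequence (n : nat) (e : rel 'I_n) : seq nat :=
  sort geq [seq degree e v | v <- enum 'I_n].

Definition toeplitz_graphic (n : nat) (d : seq nat) : Prop :=
  exists T : seq nat, is_toeplitz_set n T /\ degree_sequence (@toeplitz_adj n T) = d.

(* Conditions (a)-(d) for a permutation p of {0,...,n-1} (listed as a sequence,
   p`_k = pi(k+1) - 1).  dp k = d_{pi(k+1)} (0-indexed positions). *)
Definition perm_conditions (n : nat) (d : seq nat) (p : seq nat) : Prop :=
  let dp k := nth 0 d (nth 0 p k) in
  let m := n.-1./2 in
  let s := count (fun k => dp k.+1 != dp k) (iota 0 m) in
  [/\ forall k, k.+1 < n -> ndist (dp k.+1) (dp k) <= 1,
      forall k, k < n -> dp k = dp (n.-1 - k),
      s <= dp 0 <= n.-1 - s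
    & odd n -> odd (dp 0) = odd s].

(* Main.v *)
Require Import Defs.
From mathcomp Require Import all_boot all_order zify.

Lemma card_count_ord n (P : pred nat) :
  #|[set w : 'I_n | P w]| = count P (iota 0 n).
Proof.
by rewrite cardsE cardE -val_enum_ord count_map size_filter enumT.
Qed.

Lemma count_rev_iota (g : nat -> bool) v :
  count (fun x => g (v - x)) (iota 0 v) = count (fun k => g k.+1) (iota 0 v).
Proof.
elim: v g => [|v IH] g //.
transitivity (g 1 + count (fun k => g k.+2) (iota 0 v)).
  rewrite -addn1 iotaD count_cat /= add0n.
  rewrite (@eq_in_count _ _ (fun x => (fun y => g y.+1) (v - x))); last first.
    move=> x; rewrite mem_iota add0n => /andP[_ xv]; congr g; lia.
  rewrite (IH (fun y => g y.+1)).
  have -> : v + 1 - v = 1 by lia.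
  lia.
rewrite /=; congr (_ + _).
have -> : iota 1 v = [seq 1 + i | i <- iota 0 v] by rewrite -iotaDl.
by rewrite count_map.
Qed.

Definition Fc (T : seq nat) (i : nat) := count (fun k => k.+1 \in T) (iota 0 i).

Lemma count_formula n T (v : nat) : v < n ->
  count (fun x : nat => (v != x) && (ndist v x \in T)) (iota 0 n) = Fc T v + Fc T (n.-1 - v).
Proof.
move=> hv.
have E : n = v + (1 + (n.-1 - v)) by lia.
rewrite {1}E.
rewrite iotaD count_cat add0n iotaD count_cat /= eqxx /= add0n.
rewrite (@eq_in_count _ _ (fun x => (fun y => y \in T) (v - x))); last first.
  move=> x; rewrite mem_iota add0n => /andP[_ xv].
  have -> : (v != x) = true by apply/eqP; lia.
  rewrite /ndist; congr (_ \in T); lia.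
rewrite count_rev_iota /Fc; congr (_ + _).
rewrite add0n -addn1 iotaDl count_map add0n -(addn0 1) (iotaDl 1 0) count_map.
apply: eq_in_count => x; rewrite mem_iota => /andP[_ _] /=.
have -> : (v != v + (1+x)) = true by apply/eqP; lia.
rewrite /ndist; congr (_ \in T); [lia].
Qed.

Lemma degree_formula n T (v : 'I_n) :
  degree (@toeplitz_adj n T) v = Fc T v + Fc T (n.-1 - v).
Proof.
rewrite /degree /toeplitz_adj.
have -> : [set w | (v != w) && (ndist v w \in T)] =
   [set w : 'I_n | (fun x => (val v != x) && (ndist v x \in T)) w] by apply/setP => w; rewrite !inE.
rewrite (card_count_ord _ (fun x : nat => (val v != x) && (ndist v x \in T))).
apply: count_formula; exact: ltn_ord.
Qed.

Lemma FcS T i : Fc T i.+1 = Fc T i + (i.+1 \in T).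
Proof. by rewrite /Fc -addn1 iotaD count_cat /= add0n addn0 addn1. Qed.

Lemma Fc_top T N r : r <= N ->
  Fc T N = Fc T (N - r) + count (fun k => (N - k) \in T) (iota 0 r).
Proof.
elim: r => [|r IH] hr; first by rewrite subn0 /= addn0.
rewrite IH; last lia.
have -> : N - r = (N - r.+1).+1 by lia.
rewrite FcS -addn1 iotaD count_cat /= add0n addn0.
have -> : (N - (r + 1)).+1 = N - r by lia.
lia.
Qed.

Lemma count_pair (T : Type) (P Q : pred T) (s : seq T) :
  count P s + count Q s = count (fun x => P x != Q x) s + 2 * count (fun x => P x && Q x) s
  /\ count (fun x => P x != Q x) s + count (fun x => P x && Q x) s <= size s.
Proof.
elim: s => [|x s [IH1 IH2]] //=.
case: (P x); case: (Q x) => /=; lia.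
Qed.

Definition gT n T k := Fc T k + Fc T (n.-1 - k).

Lemma g_step n T k : k.+1 < n ->
  gT n T k.+1 + ((n.-1 - k) \in T) = gT n T k + (k.+1 \in T).
Proof.
move=> hk; rewrite /gT FcS.
have -> : n.-1 - k = (n.-1 - k.+1).+1 by lia.
rewrite FcS; lia.
Qed.

Lemma g_sym n T k : k < n -> gT n T (n.-1 - k) = gT n T k.
Proof. move=> hk; rewrite /gT; have -> : n.-1 - (n.-1 - k) = k by lia. lia. Qed.

Definition condD (n : nat) (D : nat -> nat) : Prop :=
  let m := n.-1./2 in
  let s := count (fun k => D k.+1 != D k) (iota 0 m) in
  [/\ forall k, k.+1 < n -> ndist (D k.+1) (D k) <= 1,
      forall k, k < n -> D k = D (n.-1 - k),
      s <= D 0 <= n.-1 - s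
    & odd n -> odd (D 0) = odd s].

Lemma m_facts n : 2 <= n ->
  (odd n -> n = (n.-1./2).*2.+1) /\ (~~ odd n -> n = (n.-1./2).*2 + 2).
Proof.
move=> hn; have := odd_double_half n.-1.
have E : n = n.-1.+1 by lia.
have Eo : odd n = ~~ odd n.-1 by rewrite {1}E.
rewrite -!muln2 => H; split => ho; move: Eo ho; case: (odd n); case: (odd n.-1) H => /= H; lia.
Qed.

Lemma forward_core n T : 2 <= n -> condD n (gT n T).
Proof.
move=> hn; have [mo me] := m_facts n hn.
set m := n.-1./2 in mo me *.
rewrite /condD -/m. clearbody m.
have hm : m <= n.-1 by case: (boolP (odd n)) => ho; [have := mo ho | have := me ho]; lia.
have Hs : count (fun k => gT n T k.+1 != gT n T k) (iota 0 m) =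
          count (fun k => (k.+1 \in T) != ((n.-1 - k) \in T)) (iota 0 m).
  apply: eq_in_count => k; rewrite mem_iota add0n => /andP[_ hk].
  have := @g_step n T k ltac:(lia); case: (k.+1 \in T); case: ((n.-1 - k) \in T) => /= H;
  case: (gT n T k.+1 =P gT n T k) => E /=; try done; exfalso; lia.
have Hg0 : gT n T 0 = Fc T n.-1 by rewrite /gT /Fc /= subn0.
have Htop := @Fc_top T n.-1 m hm.
rewrite -!muln2 in mo me.
have [P1 P2] := @count_pair nat (fun k => k.+1 \in T) (fun k => (n.-1 - k) \in T) (iota 0 m).
rewrite size_iota in P2.
have HFm : Fc T m = count (fun k => k.+1 \in T) (iota 0 m) by [].
rewrite Hs Hg0; split.
- move=> k hk; have := @g_step n T k hk; rewrite /ndist.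
  case: (k.+1 \in T); case: ((n.-1 - k) \in T) => /=; lia.
- by move=> k hk; rewrite g_sym.
- case: (boolP (odd n)) => ho.
  + have hnm : n.-1 - m = m by have := mo ho; lia.
    rewrite hnm in Htop; apply/andP; split; lia.
  + have hnm : n.-1 - m = m.+1 by have := me ho; lia.
    rewrite hnm FcS in Htop; apply/andP; split; [lia|].
    have := me ho; case: (m.+1 \in T) Htop => /= Htop H; rewrite HFm in Htop; move: P1 P2 Htop H; set X := count _ _; set Y := count _ _; set Z := count _ _; set W := count _ _; lia.
- move=> ho.
  have hnm : n.-1 - m = m by have := mo ho; lia.
  rewrite hnm in Htop.
  have -> : Fc T n.-1 = count (fun k => (k.+1 \in T) != ((n.-1 - k) \in T)) (iota 0 m)
     + 2 * count (fun k => (k.+1 \in T) && ((n.-1 - k) \in T)) (iota 0 m) by lia.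
  by rewrite oddD oddM /= addbF.
Qed.

Lemma ivt_count (P : pred nat) r c : c <= count P (iota 0 r) ->
  exists J, J <= r /\ count P (iota 0 J) = c.
Proof.
elim: r c => [|r IH] c; first by move=> /= h; exists 0; split => //=; lia.
move=> h; case: (leqP c (count P (iota 0 r))) => hc.
  by have [J [h1 h2]] := IH c hc; exists J; split => //; lia.
exists r.+1; split => //.
move: h hc; rewrite -addn1 iotaD count_cat /= addn0; case: (P r) => /=; lia.
Qed.

Lemma count_prefix (P : pred nat) J m : J <= m ->
  count (fun k => P k && (k < J)) (iota 0 m) = count P (iota 0 J).
Proof.
move=> hJ; have -> : m = J + (m - J) by lia.
rewrite iotaD count_cat add0n.
rewrite (@eq_in_count _ _ P (iota 0 J)); last first.
  by move=> k; rewrite mem_iota => /andP[_ hk]; rewrite hk andbT.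
rewrite (@eq_in_count _ _ pred0 (iota J _)); last first.
  move=> k; rewrite mem_iota => /andP[hk _]; rewrite /=.
  have -> : (k < J) = false by apply/negbTE; rewrite -leqNgt.
  by rewrite andbF.
by rewrite count_pred0 addn0.
Qed.

Lemma converse_core n D : 2 <= n -> condD n D ->
  exists T, is_toeplitz_set n T /\ forall k, k < n -> gT n T k = D k.
Proof.
move=> hn; have [mo me] := m_facts n hn.
rewrite /condD.
set m := n.-1./2 in mo me *.
set s := count _ _.
move=> [Ha Hb /andP[Hc1 Hc2] Hd].
rewrite -!muln2 in mo me.
have hm : m < n by case: (boolP (odd n)) => ho; [have := mo ho | have := me ho]; lia.
set eqk := fun k => D k.+1 == D k.
have Hcnt : count eqk (iota 0 m) + s = m.
  rewrite -[X in _ = X](size_iota 0 m) -(count_predC eqk).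
  by congr (_ + _); apply: eq_count => k.
set c := (D 0 - s)./2.
set e := ~~ odd n && odd (D 0 - s).
have HD0 : D 0 = s + 2 * c + e.
  have := odd_double_half (D 0 - s); rewrite -muln2 /e -/c.
  case: (boolP (odd n)) => ho /=.
    have := Hd ho; rewrite (oddB Hc1) => ->; rewrite addbb /=; lia.
  lia.
have hc : c <= count eqk (iota 0 m).
  case: (boolP (odd n)) => ho.
    have := mo ho; move: HD0; rewrite /e ho /=; lia.
  have := me ho; move: HD0; case: e; lia.
have [J [hJ hJc]] := @ivt_count eqk m c hc.
have He : odd n -> e = false by rewrite /e => ->.
clearbody c e.
set X := fun k => (D k < D k.+1) || (eqk k && (k < J)).
set Y := fun k => (D k.+1 < D k) || (eqk k && (k < J)).
set A := fun j => if j <= m then X j.-1 else if n.-1 - j < m then Y (n.-1 - j) else e.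
exists (filter A (iota 1 n.-1)).
set T := filter A (iota 1 n.-1).
have memT : forall j, (j \in T) = A j && (1 <= j < n).
  move=> j; rewrite mem_filter mem_iota; congr (_ && _); congr (_ && _); lia.
split.
  apply/andP; split; first by rewrite filter_uniq // iota_uniq.
  apply/allP => t; rewrite memT => /andP[_ h]; lia.
have aX : forall k, k < m -> (k.+1 \in T) = X k.
  move=> k hk; rewrite memT /A.
  have -> : k.+1 <= m by lia.
  have -> : 1 <= k.+1 < n by lia.
  by rewrite andbT.
have aY : forall k, k < m -> ((n.-1 - k) \in T) = Y k.
  move=> k hk; rewrite memT /A.
  have -> : (n.-1 - k <= m) = false by apply/negbTE; rewrite -ltnNge; case: (boolP (odd n)) => ho; [have := mo ho | have := me ho]; lia.
  have -> : n.-1 - (n.-1 - k) = k by lia.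
  rewrite hk.
  have -> : 1 <= n.-1 - k < n by lia.
  by rewrite andbT.
have XY : forall k, k < m -> D k.+1 + Y k = D k + X k.
  move=> k hk; have := Ha k ltac:(lia); rewrite /X /Y /eqk /ndist.
  case: (ltngtP (D k) (D k.+1)) => h /=; lia.
have Hs : count (fun k => X k != Y k) (iota 0 m) = s.
  apply: eq_in_count => k; rewrite mem_iota add0n => /andP[_ hk].
  rewrite /X /Y /eqk; case: (ltngtP (D k) (D k.+1)) => h /=; rewrite ?eqxx //.
have Hb2 : count (fun k => X k && Y k) (iota 0 m) = c.
  rewrite -hJc -(@count_prefix eqk J m hJ).
  apply: eq_in_count => k _.
  rewrite /X /Y /eqk; case: (ltngtP (D k) (D k.+1)) => h /=; rewrite ?andbb //.
have [P1 _] := @count_pair nat X Y (iota 0 m).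
have HX : Fc T m = count X (iota 0 m).
  by apply: eq_in_count => k; rewrite mem_iota add0n => /andP[_ hk]; rewrite aX.
have HY : count (fun k => (n.-1 - k) \in T) (iota 0 m) = count Y (iota 0 m).
  by apply: eq_in_count => k; rewrite mem_iota add0n => /andP[_ hk]; rewrite aY.
have Htop := @Fc_top T n.-1 m ltac:(lia).
have Hmid : Fc T (n.-1 - m) = Fc T m + e.
  case: (boolP (odd n)) => ho.
    have -> : n.-1 - m = m by have := mo ho; lia.
    by rewrite He // addn0.
  have -> : n.-1 - m = m.+1 by have := me ho; lia.
  rewrite FcS memT /A.
  have -> : (m.+1 <= m) = false by rewrite ltnn.
  have -> : n.-1 - m.+1 = m by have := me ho; lia.
  rewrite ltnn.
  have -> : 0 < m.+1 < n by have := me ho; lia.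
  by rewrite andbT.
have g0 : gT n T 0 = D 0.
  rewrite /gT /Fc /= add0n subn0 -/(Fc T n.-1) Htop Hmid HX HY addnAC P1 Hs Hb2 HD0; lia.
have gm : forall k, k <= m -> gT n T k = D k.
  elim => [|k IH] hk; first exact: g0.
  have := @g_step n T k ltac:(lia); rewrite aX ?aY; try lia.
  have := XY k ltac:(lia); have := IH ltac:(lia); lia.
move=> k hk; case: (leqP k m) => hkm; first exact: gm.
rewrite -g_sym // Hb // gm //.
case: (boolP (odd n)) => ho; [have := mo ho | have := me ho]; lia.
Qed.

Lemma condD_ext n D1 D2 : 2 <= n -> (forall k, k < n -> D1 k = D2 k) -> condD n D1 -> condD n D2.
Proof.
move=> hn E; rewrite /condD.
have hm : n.-1./2 < n by have := odd_double_half n.-1; rewrite -muln2; lia.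
have Hs : count (fun k => D1 k.+1 != D1 k) (iota 0 n.-1./2) = count (fun k => D2 k.+1 != D2 k) (iota 0 n.-1./2).
  apply: eq_in_count => k; rewrite mem_iota add0n => /andP[_ hk]; rewrite !E //; lia.
rewrite Hs (E 0) //; last lia.
move=> [Ha Hb Hc Hd]; split => //.
- by move=> k hk; rewrite -!E //; [apply: Ha | lia].
- by move=> k hk; rewrite -!E //; [apply: Hb | lia].
Qed.

Lemma geq_trans : transitive geq.
Proof. by move=> a b c h1 h2; apply: leq_trans h2 h1. Qed.
Lemma geq_total : total geq.
Proof. by move=> a b; apply: leq_total. Qed.
Lemma geq_anti : antisymmetric geq.
Proof. by move=> a b h; apply/eqP; rewrite eqn_leq andbC. Qed.

Lemma degs_map n T :
  [seq degree (@toeplitz_adj n T) v | v <- enum 'I_n] = [seq gT n T k | k <- iota 0 n].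
Proof.
rewrite -val_enum_ord -map_comp; apply: eq_map => v /=.
by rewrite degree_formula.
Qed.

Theorem theorem4p4 (n : nat) (d : seq nat) :
  2 <= n -> size d = n -> sorted geq d ->
  toeplitz_graphic n d <->
  exists p : seq nat, perm_eq p (iota 0 n) /\ perm_conditions n d p.
Proof.
move=> hn hd hs; split.
- move=> [T [HT Hdeg]].
  move: Hdeg; rewrite /degree_sequence degs_map => Hdeg.
  have Hp : perm_eq [seq gT n T k | k <- iota 0 n] d.
    by rewrite -Hdeg perm_sym perm_sort.
  have [Is HIs HL] := perm_iotaP 0 Hp.
  exists Is; split; first by rewrite -hd.
  have sIs : size Is = n by rewrite (perm_size HIs) size_iota.
  apply: (@condD_ext n (gT n T)) => //; last exact: forward_core.
  move=> k hk.
  have := congr1 (fun s => nth 0 s k) HL => /=.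
  by rewrite (nth_map 0) ?size_iota // nth_iota // add0n (nth_map 0) ?sIs.
- move=> [p [Hp Hc]].
  have sp : size p = n by rewrite (perm_size Hp) size_iota.
  have [T [HT HTk]] := @converse_core n (fun k => nth 0 d (nth 0 p k)) hn Hc.
  exists T; split => //.
  rewrite /degree_sequence degs_map -{1}(sorted_sort geq_trans hs).
  apply/(perm_sortP geq_total geq_trans geq_anti).
  apply/(perm_iotaP 0); exists p; first by rewrite hd.
  apply: (@eq_from_nth _ 0); first by rewrite !size_map size_iota sp.
  move=> k; rewrite size_map size_iota => hk.
  by rewrite (nth_map 0) ?size_iota // nth_iota // add0n HTk // (nth_map 0) ?sp.
Qed.
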